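(* Let $\mathfrak k$ be a finite-dimensional Lie algebra such that $Y(\mathfrak k)$ is a unique factorisation domain. Let $\lambda\neq0$ be the weight of a semi-invariant $x$ which is irreducible in $S(\mathfrak k)$. Then at least one of the $Y(\mathfrak k)$-modules $S(\mathfrak k)_\lambda$ and $S(\mathfrak k)_{-\lambda}$ is free of rank at most $1$.
   Context: For a finite-dimensional Lie algebra $\mathfrak k$ over an algebraically closed field $\mathbb C$ of characteristic $0$, the adjoint action extends to $S(\mathfrak k)$ by derivations. $Y(\mathfrak k)$ is the algebra of invariants; for $\mu\in\mathfrak k^*$, $S(\mathfrak k)_\mu=\{f\in S(\mathfrak k): x\cdot f=\mu(x)f\ \forall x\in\mathfrak k\}$, a $Y(\mathfrak k)$-module. A semi-invariant is a nonzero element of some $S(\mathfrak k)_\mu$, $\mu$ being its weight. *)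

(* Defs.v *)
From HB Require Import structures.
From mathcomp Require Import all_boot all_order all_fingroup all_algebra.
From mathcomp Require Import mpoly.
Set Implicit Arguments. Unset Strict Implicit. Unset Printing Implicit Defensive.
Import Order.TTheory GRing.Theory.
Local Open Scope ring_scope.

(* The Lie algebra k is F^n (row vectors, standard basis e_j = delta_mx 0 j)
   with a bracket [.,.]. *)
Definition is_lie_bracket (F : fieldType) (n : nat)
  (br : 'rV[F]_n -> 'rV[F]_n -> 'rV[F]_n) : Prop :=
  [/\ (forall (a : F) u v w, br (a *: u + v) w = a *: br u w + br v w),
      (forall (a : F) u v w, br u (a *: v + w) = a *: br u v + br u w),
      (forall u, br u u = 0) &
      (forall u v w, br u (br v w) + br v (br w u) + br w (br u v) = 0)].

Definition lin_functional (F : fieldType) (n : nat) (mu : 'rV[F]_n -> F) : Prop :=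
  forall (a : F) u v, mu (a *: u + v) = a * mu u + mu v.

(* S(k) = F[X_0, ..., X_{n-1}], X_j corresponding to e_j.  The element of
   S(k) corresponding to a vector u of k: *)
Definition vec_poly (F : fieldType) (n : nat) (u : 'rV[F]_n) : {mpoly F[n]} :=
  \sum_(l < n) u 0 l *: 'X_l.

(* The adjoint action of v in k, extended to S(k) as a derivation:
   the unique derivation with X_j |-> [v, e_j]. *)
Definition ad_act (F : fieldType) (n : nat)
  (br : 'rV[F]_n -> 'rV[F]_n -> 'rV[F]_n) (v : 'rV[F]_n) (f : {mpoly F[n]})
  : {mpoly F[n]} :=
  \sum_(j < n) vec_poly (br v (delta_mx 0 j)) * f^`M(j).

Definition semi_inv_space (F : fieldType) (n : nat)
  (br : 'rV[F]_n -> 'rV[F]_n -> 'rV[F]_n) (mu : 'rV[F]_n -> F)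
  (f : {mpoly F[n]}) : Prop :=
  forall v : 'rV[F]_n, ad_act br v f = mu v *: f.

Definition invariant (F : fieldType) (n : nat)
  (br : 'rV[F]_n -> 'rV[F]_n -> 'rV[F]_n) (f : {mpoly F[n]}) : Prop :=
  forall v : 'rV[F]_n, ad_act br v f = 0.

Definition Y_unit (F : fieldType) (n : nat) (br : 'rV[F]_n -> 'rV[F]_n -> 'rV[F]_n)
  (u : {mpoly F[n]}) : Prop :=
  invariant br u /\ exists2 w, invariant br w & u * w = 1.

Definition Y_irreducible (F : fieldType) (n : nat) (br : 'rV[F]_n -> 'rV[F]_n -> 'rV[F]_n)
  (p : {mpoly F[n]}) : Prop :=
  [/\ invariant br p, p != 0, ~ Y_unit br p &
      forall a b, invariant br a -> invariant br b -> p = a * b ->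
        Y_unit br a \/ Y_unit br b].

Definition Y_associate (F : fieldType) (n : nat) (br : 'rV[F]_n -> 'rV[F]_n -> 'rV[F]_n)
  (p q : {mpoly F[n]}) : Prop :=
  exists2 u, Y_unit br u & p = u * q.

(* Y(k) is a unique factorisation domain: every nonzero nonunit of Y(k) is a
   product of irreducibles of Y(k), uniquely up to order and associates.
   (Y(k) is a subring of the domain S(k), hence an integral domain.) *)
Definition Y_is_UFD (F : fieldType) (n : nat) (br : 'rV[F]_n -> 'rV[F]_n -> 'rV[F]_n)
  : Prop :=
  (forall f, invariant br f -> f != 0 -> ~ Y_unit br f ->
     exists s : seq {mpoly F[n]},
       [/\ s != [::], (forall p, p \in s -> Y_irreducible br p) &
           f = \prod_(p <- s) p]) /\
  (forall s1 s2 : seq {mpoly F[n]},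
     (forall p, p \in s1 -> Y_irreducible br p) ->
     (forall p, p \in s2 -> Y_irreducible br p) ->
     \prod_(p <- s1) p = \prod_(p <- s2) p ->
     size s1 = size s2 /\
     exists sigma : 'S_(size s1),
       forall i : 'I_(size s1),
         Y_associate br (nth 0 s1 i) (nth 0 s2 (sigma i))).

Definition S_irreducible (F : fieldType) (n : nat) (p : {mpoly F[n]}) : Prop :=
  [/\ p != 0, p \isn't a GRing.unit &
      forall a b : {mpoly F[n]}, p = a * b ->
        a \is a GRing.unit \/ b \is a GRing.unit].

Definition free_of_rank (F : fieldType) (n : nat)
  (br : 'rV[F]_n -> 'rV[F]_n -> 'rV[F]_n) (mu : 'rV[F]_n -> F) (r : nat) : Prop :=
  exists b : 'I_r -> {mpoly F[n]},
    [/\ (forall i, semi_inv_space br mu (b i)),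
        (forall f, semi_inv_space br mu f ->
           exists a : 'I_r -> {mpoly F[n]},
             (forall i, invariant br (a i)) /\ f = \sum_(i < r) a i * b i) &
        (forall a a' : 'I_r -> {mpoly F[n]},
           (forall i, invariant br (a i)) -> (forall i, invariant br (a' i)) ->
           \sum_(i < r) a i * b i = \sum_(i < r) a' i * b i -> a =1 a')].

(* Main.v *)
Require Import Defs.
From HB Require Import structures.
From mathcomp Require Import all_boot all_order all_fingroup all_algebra.
From mathcomp Require Import mpoly.
From Stdlib Require Import ClassicalEpsilon Classical.
From mathcomp Require Import zify ring.
Import GRing.Theory.
Local Open Scope ring_scope.
Local Notation invariant := Defs.invariant.

Set Implicit Arguments. Unset Strict Implicit. Unset Printing Implicit Defensive.

Definition isb (P : Prop) : bool :=
  if excluded_middle_informative P then true else false.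
Lemma isbP (P : Prop) : reflect P (isb P).
Proof. by rewrite /isb; case: excluded_middle_informative => H; constructor. Qed.

Lemma min_counter (Q : nat -> Prop) :
  (exists i, ~ Q i) -> exists i, ~ Q i /\ forall k, (k < i)%N -> Q k.
Proof.
move=> ex.
have ex' : exists i, isb (~ Q i) by case: ex => i Hi; exists i; apply/isbP.
case: (ex_minnP ex') => i /isbP Hi Hmin; exists i; split=> // k Hk.
apply: NNPP => nQ; have := Hmin k (introT (isbP _) nQ); rewrite leqNgt Hk.
by [].
Qed.

Definition dv (R : pzRingType) (a b : R) := exists c, b = c * a.
Definition irr (R : comUnitRingType) (p : R) :=
  [/\ p != 0, p \isn't a GRing.unit &
      forall a b, p = a * b -> a \is a GRing.unit \/ b \is a GRing.unit].
Definition primeP (R : comUnitRingType) :=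
  forall p : R, irr p -> forall a b, dv p (a * b) -> dv p a \/ dv p b.

Section Dv.
Variable R : comPzRingType.
Implicit Types a b c : R.
Lemma dvMr a b c : dv a b -> dv a (b * c).
Proof. by case=> k ->; exists (k * c); rewrite mulrAC. Qed.
Lemma dvMl a b c : dv a b -> dv a (c * b).
Proof. by case=> k ->; exists (c * k); rewrite mulrA. Qed.
Lemma dv0 a : dv a 0. Proof. by exists 0; rewrite mul0r. Qed.
Lemma dvD a b c : dv a b -> dv a c -> dv a (b + c).
Proof. by case=> k -> [l ->]; exists (k + l); rewrite mulrDl. Qed.
Lemma dvN a b : dv a b -> dv a (- b).
Proof. by case=> k ->; exists (- k); rewrite mulNr. Qed.
Lemma dv_sum a (I : Type) (s : seq I) (P : pred I) (F : I -> R) :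
  (forall i, P i -> dv a (F i)) -> dv a (\sum_(i <- s | P i) F i).
Proof.
move=> H; elim/big_rec: _ => [|i x Pi Hx]; first exact: dv0.
exact: dvD (H i Pi) Hx.
Qed.
Lemma dv_refl a : dv a a. Proof. by exists 1; rewrite mul1r. Qed.
Lemma dv_trans a b c : dv a b -> dv b c -> dv a c.
Proof. by case=> k -> [l ->]; exists (l * k); rewrite mulrA. Qed.
End Dv.

Section Euclid.
Variable D : idomainType.
Variable sz : D -> nat.
Hypothesis hsz : forall a b : D, a != 0 -> b != 0 -> b \isn't a GRing.unit ->
  (sz a < sz (a * b))%N.
Hypothesis hP : primeP D.

Lemma not_irr_split (a : D) : a != 0 -> a \isn't a GRing.unit -> ~ irr a ->
  exists u v, [/\ a = u * v, u \isn't a GRing.unit & v \isn't a GRing.unit].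
Proof.
move=> a0 au nirr; apply: NNPP => nex; apply: nirr; split=> // u v e.
apply: NNPP => nuv; apply: nex; exists u, v; split=> //.
  by apply/negP => U; apply: nuv; left.
by apply/negP => U; apply: nuv; right.
Qed.

Lemma irr_factor (a : D) : a != 0 -> a \isn't a GRing.unit ->
  exists p c, irr p /\ a = p * c.
Proof.
move: {2}(sz a) (leqnn (sz a)) => k; elim: k a => [|k IH] a.
  move=> sa a0 au; case: (classic (irr a)) => [ia|nia]; first by exists a, 1; rewrite mulr1.
  case: (not_irr_split a0 au nia) => u [v [e uu vu]].
  have u0 : u != 0 by apply: contraNneq a0 => u0; rewrite e u0 mul0r.
  have v0 : v != 0 by apply: contraNneq a0 => v0; rewrite e v0 mulr0.
  by have := hsz u0 v0 vu; rewrite -e; move: sa; rewrite leqn0 => /eqP ->.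
move=> sa a0 au; case: (classic (irr a)) => [ia|nia]; first by exists a, 1; rewrite mulr1.
case: (not_irr_split a0 au nia) => u [v [e uu vu]].
have u0 : u != 0 by apply: contraNneq a0 => u0; rewrite e u0 mul0r.
have v0 : v != 0 by apply: contraNneq a0 => v0; rewrite e v0 mulr0.
have := hsz u0 v0 vu; rewrite -e => lt.
have su : (sz u <= k)%N by rewrite -ltnS (leq_trans lt sa).
have [p [c [ip eu]]] := IH u su u0 uu.
by exists p, (c * v); split=> //; rewrite e eu mulrA.
Qed.

Lemma coef_dv (p : D) (g : {poly D}) :
  dv p%:P g <-> forall i, dv p g`_i.
Proof.
split.
  by case=> c -> i; exists c`_i; rewrite coefMC.
move=> H.
pose cf i := proj1_sig (constructive_indefinite_description _ (H i)).
have Hcf i : g`_i = cf i * p.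
  by rewrite /cf; case: constructive_indefinite_description.
exists (\poly_(i < size g) cf i); apply/polyP => i.
rewrite coefMC coef_poly; case: ltnP => // le.
by rewrite mul0r nth_default.
Qed.

Lemma unit_polyC (c : D) : (c%:P \is a GRing.unit) = (c \is a GRing.unit).
Proof.
rewrite poly_unitE coefC /= size_polyC.
case: (boolP (c == 0)) => [/eqP->|//]; by rewrite unitr0.
Qed.

Lemma irr_polyC (c : D) : irr (c%:P : {poly D}) -> irr c.
Proof.
case=> c0 cu H; split.
- by rewrite -polyC_eq0.
- by rewrite -unit_polyC.
move=> a b e; have := H a%:P b%:P; rewrite -polyCM -e !unit_polyC; exact.
Qed.

Lemma polyC_prime (p : D) : irr p -> forall g h : {poly D},
  dv p%:P (g * h) -> dv p%:P g \/ dv p%:P h.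
Proof.
move=> ip g h /coef_dv Hgh.
apply: NNPP => /not_or_and [ng nh].
have [i [Hi Hi']] : exists i, ~ dv p g`_i /\ forall k, (k < i)%N -> dv p g`_k.
  apply: min_counter; apply: NNPP => nex; apply: ng; apply/coef_dv => i.
  by apply: NNPP => ni; apply: nex; exists i.
have [j [Hj Hj']] : exists j, ~ dv p h`_j /\ forall k, (k < j)%N -> dv p h`_k.
  apply: min_counter; apply: NNPP => nex; apply: nh; apply/coef_dv => j.
  by apply: NNPP => nj; apply: nex; exists j.
have := Hgh (i + j)%N; rewrite coefM.
have ii : (i < (i + j).+1)%N by rewrite ltnS leq_addr.
rewrite (bigD1 (Ordinal ii)) //= addKn => Hs.
have Hr : dv p (\sum_(k < (i + j).+1 | k != Ordinal ii) g`_k * h`_(i + j - k)).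
  apply: dv_sum => k nk; case: (ltngtP k i) => [lt|gt|eq].
  - by apply: dvMr; apply: Hi'.
  - apply: dvMl; apply: Hj'; move: gt (ltn_ord k); move: (nat_of_ord k) => kk.
    lia.
  - by move: nk; rewrite -val_eqE /= eq => /eqP.
have : dv p (g`_i * h`_j).
  have -> : g`_i * h`_j = (g`_i * h`_j + \sum_(k < (i + j).+1 | k != Ordinal ii) g`_k * h`_(i + j - k)) - \sum_(k < (i + j).+1 | k != Ordinal ii) g`_k * h`_(i + j - k) by rewrite addrK.
  by apply: dvD => //; apply: dvN.
by case/(hP ip).
Qed.

Lemma dv_size (R : idomainType) (a b : {poly R}) : b != 0 -> dv a b -> (size a <= size b)%N.
Proof.
move=> b0 [c e]; move: b0; rewrite e mulf_eq0 negb_or => /andP[c0 a0]; apply/idP.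
rewrite size_mul // -subn1; have := size_poly_gt0 c; rewrite c0 => h; by rewrite addnC -addnBA // leq_addr.
Qed.

Lemma irr_noC (f : {poly D}) (p : D) : irr f -> (1 < size f)%N -> irr p ->
  ~ dv p%:P f.
Proof.
move=> [f0 fu Hf] sf [p0 pu _] [u e].
case: (Hf _ _ e) => [uu|]; last by rewrite unit_polyC (negbTE pu).
move: uu; rewrite poly_unitE => /andP[/eqP su _].
have u0 : u != 0 by apply: contraNneq f0 => u0; rewrite e u0 mul0r.
have pp0 : (p%:P : {poly D}) != 0 by rewrite polyC_eq0.
by move: sf; rewrite e size_mul // su size_polyC p0.
Qed.

Lemma sz_ind (P : D -> Prop) :
  (forall c, (forall c', (sz c' < sz c)%N -> P c') -> P c) -> forall c, P c.
Proof.
move=> H c; move: {2}(sz c) (leqnn (sz c)) => k.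
elim: k c => [|k IH] c sc; apply: H => c' lt.
  by move: (leq_trans lt sc).
by apply: IH; rewrite -ltnS (leq_trans lt sc).
Qed.

Lemma factor_step (c : D) : c != 0 -> c \isn't a GRing.unit ->
  exists p c', [/\ irr p, c = p * c', c' != 0 & (sz c' < sz c)%N].
Proof.
move=> c0 cu; have [p [c' [ip ec]]] := irr_factor c0 cu.
have c'0 : c' != 0 by apply: contraNneq c0 => e; rewrite ec e mulr0.
exists p, c'; split=> //.
case: ip => p0 pu _; by rewrite ec mulrC; apply: hsz.
Qed.

Lemma cancelC (f : {poly D}) : irr f -> (1 < size f)%N ->
  forall c g, c != 0 -> dv f (c%:P * g) -> dv f g.
Proof.
move=> fi sf; elim/sz_ind => c IH g c0 [w e].
case: (boolP (c \is a GRing.unit)) => cu.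
  by exists (c^-1%:P * w); rewrite -mulrA -[w * f]e mulrA -polyCM mulVr // mul1r.
have [p [c' [ip ec c'0 lt]]] := factor_step c0 cu.
have : dv p%:P (w * f) by rewrite -e ec polyCM -mulrA; apply: dvMr; apply: dv_refl.
case/(polyC_prime ip) => [[w' ew]|]; last by move/(irr_noC fi sf ip).
apply: (IH c' lt) => //; exists w'.
have p0 : (p%:P : {poly D}) != 0 by rewrite polyC_eq0; case: ip.
apply: (mulIf p0); move: e; rewrite ew ec polyCM.
by move=> e; transitivity (p%:P * c'%:P * g); [ring | rewrite e; ring].
Qed.

Lemma splitC (f : {poly D}) : irr f -> (1 < size f)%N ->
  forall c q r, c != 0 -> q * r = c%:P * f ->
  exists e : D, e != 0 /\ (dv f (e%:P * r) \/ dv f (e%:P * q)).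
Proof.
move=> fi sf; elim/sz_ind => c IH q r c0 e.
case: (boolP (c \is a GRing.unit)) => cu.
  have ef : f = (c^-1%:P * q) * r by rewrite -mulrA e mulrA -polyCM mulVr // mul1r.
  exists 1; split; first exact: oner_neq0.
  rewrite !mul1r; case: fi => f0 fu H; case: (H _ _ ef) => U.
    left; exists (c^-1%:P * q)^-1; by rewrite ef mulrA mulVr // mul1r.
  right; exists (c%:P * r^-1); rewrite -[q](mulrK U) e; ring.
have [p [c' [ip ec c'0 lt]]] := factor_step c0 cu.
have p0 : (p%:P : {poly D}) != 0 by rewrite polyC_eq0; case: ip.
have : dv p%:P (q * r) by rewrite e ec polyCM -mulrA; apply: dvMr; apply: dv_refl.
case/(polyC_prime ip) => [[q' eq']|[r' er']].
  have e' : q' * r = c'%:P * f.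
    by apply: (mulIf p0); transitivity (q * r); [rewrite eq'; ring | rewrite e ec polyCM; ring].
  have [e1 [e10 [H|H]]] := IH c' lt q' r c'0 e'.
    by exists e1; split=> //; left.
  by exists e1; split=> //; right; rewrite eq' mulrA; apply: dvMr.
have e' : q * r' = c'%:P * f.
  by apply: (mulIf p0); transitivity (q * r); [rewrite er'; ring | rewrite e ec polyCM; ring].
have [e1 [e10 [H|H]]] := IH c' lt q r' c'0 e'.
  by exists e1; split=> //; left; rewrite er' mulrA; apply: dvMr.
by exists e1; split=> //; right.
Qed.

Lemma poly_primeP : primeP {poly D}.
Proof.
move=> f fi g h dvgh.
case: (leqP (size f) 1) => sf.
  have ef := size1_polyC sf.
  have ip : irr f`_0 by apply: irr_polyC; rewrite -ef.
  by rewrite ef; apply: polyC_prime => //; rewrite -ef.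
have f0 : f != 0 by case: fi.
pose M (r : {poly D}) := r != 0 /\ exists a b, r = a * f + b * g.
have [s [Hs Hmin]] : exists s, ~ ~ (exists r, M r /\ size r = s) /\
    forall k, (k < s)%N -> ~ exists r, M r /\ size r = k.
  apply: (min_counter (Q := fun k => ~ exists r, M r /\ size r = k)).
  exists (size f) => H; apply: H; exists f; split=> //; split=> //.
  by exists 1, 0; rewrite mul1r mul0r addr0.
have [r [[r0 [a [b er]]] sr]] := NNPP _ Hs.
have small : forall p a' b', p = a' * f + b' * g -> (size p < size r)%N -> p = 0.
  move=> p a' b' ep lt; apply: NNPP => p0; apply: (Hmin (size p)); first by rewrite -sr.
  by exists p; split=> //; split; [apply/eqP | exists a', b'].
have lc0 : lead_coef r != 0 by rewrite lead_coef_eq0.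
have divf : (lead_coef r ^+ scalp f r)%:P * f = f %/ r * r.
  have e := Pdiv.Idomain.divp_eq f r; rewrite -mul_polyC in e.
  have : f %% r = 0.
    apply: (small _ ((lead_coef r ^+ scalp f r)%:P - f %/ r * a) (- (f %/ r * b))); last by rewrite ltn_modpN0.
    have -> : f %% r = (lead_coef r ^+ scalp f r)%:P * f - f %/ r * r.
      by rewrite e addrAC subrr add0r.
    rewrite er; ring.
  by move=> m0; rewrite e m0 addr0.
have divg : (lead_coef r ^+ scalp g r)%:P * g = g %/ r * r.
  have e := Pdiv.Idomain.divp_eq g r; rewrite -mul_polyC in e.
  have : g %% r = 0.
    apply: (small _ (- (g %/ r * a)) ((lead_coef r ^+ scalp g r)%:P - g %/ r * b)); last by rewrite ltn_modpN0.
    have -> : g %% r = (lead_coef r ^+ scalp g r)%:P * g - g %/ r * r.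
      by rewrite e addrAC subrr add0r.
    rewrite er; ring.
  by move=> m0; rewrite e m0 addr0.
case: (leqP (size r) 1) => sr1.
  right; have erc := size1_polyC sr1.
  have d0 : r`_0 != 0 by rewrite -polyC_eq0 -erc.
  apply: (cancelC fi sf d0); case: dvgh => w ew.
  exists (a * h + b * w); rewrite -erc er; transitivity (a * f * h + b * (g * h)); first ring.
  by rewrite ew; ring.
have c0 : lead_coef r ^+ scalp f r != 0 by rewrite expf_neq0.
have [e [e0 [[w ew]|[w ew]]]] := splitC fi sf c0 (esym divf).
  left; have ec0 : e * lead_coef r ^+ scalp g r != 0 by rewrite mulf_neq0 // expf_neq0.
  apply: (cancelC fi sf ec0); exists (w * (g %/ r)).
  transitivity ((g %/ r) * (e%:P * r)); last by rewrite ew; ring.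
  by rewrite polyCM -mulrA divg; ring.
exfalso.
have : w * r = (e * lead_coef r ^+ scalp f r)%:P.
  apply: (mulIf f0); transitivity (w * f * r); first ring.
  transitivity (e%:P * (f %/ r) * r); first by rewrite ew.
  rewrite -mulrA -divf polyCM; ring.
have ec0 : e * lead_coef r ^+ scalp f r != 0 by rewrite mulf_neq0.
move=> ewr; have w0 : w != 0.
  by apply/eqP => w0; move: ewr; rewrite w0 mul0r => /esym/eqP; rewrite polyC_eq0 (negbTE ec0).
have := congr1 (fun p : {poly D} => size p) ewr; rewrite /=; rewrite size_polyC ec0 size_mul //.
have := size_poly_gt0 w; rewrite w0; move: sr1; move: (size w) (size r) => x y; lia.
Qed.
End Euclid.


Section Uni.
Variable F : idomainType.
Variable n : nat.

Definition res (m : 'X_{1..n.+1}) : 'X_{1..n} :=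
  [multinom m (widen_ord (leqnSn n) i) | i < n].

Lemma res_inj (m1 m2 : 'X_{1..n.+1}) :
  res m1 = res m2 -> m1 ord_max = m2 ord_max -> m1 = m2.
Proof.
move=> er em; apply/mnmP => i; case: (unliftP ord_max i) => [j ->|->] //.
have -> : lift ord_max j = widen_ord (leqnSn n) j.
  by apply: val_inj; rewrite /= /bump leqNgt ltn_ord.
by move/mnmP: er => /(_ j); rewrite !mnmE.
Qed.

Lemma muni_coef (p : {mpoly F[n.+1]}) m :
  ((muni p)`_(m ord_max))@_(res m) = p@_m.
Proof.
rewrite [in RHS](mpolyE p) muniE coef_sum !raddf_sum /=.
apply: eq_bigr => m2 _; rewrite coefZ coefXn !mcoeffZ mcoeffX.
have key : (m2 == m) = (res m2 == res m) && (m2 ord_max == m ord_max).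
  apply/eqP/andP => [->|[/eqP a /eqP b]]; first by split.
  exact: res_inj.
rewrite key eq_sym; case: (m2 ord_max == m ord_max); last by rewrite andbF mulr0 mcoeff0 mulr0.
by rewrite andbT mulr1 mcoeffZ mcoeffX.
Qed.

Lemma muni_inj : injective (@muni n F).
Proof.
move=> p q e; apply/mpolyP => m; rewrite -!muni_coef e //.
Qed.

Lemma muniX (m : 'X_{1..n.+1}) : muni ('X_[m] : {mpoly F[n.+1]}) = 'X_[res m] *: 'X^(m ord_max).
Proof. by rewrite muniE msuppX big_seq1 mcoeffX eqxx scale1r. Qed.

Lemma res_wid (m : 'X_{1..n}) : res (mnmwiden m) = m.
Proof. by apply/mnmP => i; rewrite mnmE mnmwiden_widen. Qed.

Lemma muni_mwiden (c : {mpoly F[n]}) : muni (mwiden c) = c%:P.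
Proof.
have -> : mwiden c = \sum_(m <- msupp c) c@_m *: 'X_[mnmwiden m].
  rewrite {1}(mpolyE c) (big_morph _ (@mwidenD _ _) (@mwiden0 _ _)).
  by apply: eq_bigr => m _; rewrite mwidenZ mwidenX.
rewrite (big_morph _ (@muniD _ _) (@muni0 _ _)) [in RHS](mpolyE c) rmorph_sum /=.
apply: eq_bigr => m _; rewrite muniZ muniX res_wid mnmwiden_ordmax.
by rewrite expr0 -alg_polyC scalerA mul_mpolyC.
Qed.

Lemma muni_Xmax : muni ('X_ord_max : {mpoly F[n.+1]}) = 'X.
Proof.
rewrite muniX.
have -> : res U_(ord_max) = 0%MM.
  apply/mnmP => i; rewrite !mnmE /=.
  by rewrite -val_eqE /= eqn_leq leqNgt ltn_ord.
by rewrite mnmE eqxx expr1 mpolyX0 scale1r.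
Qed.

Lemma muni_surj (q : {poly {mpoly F[n]}}) : exists p, muni p = q.
Proof.
exists (\sum_(i < size q) mwiden q`_i * 'X_ord_max ^+ i).
rewrite raddf_sum /= -[in RHS](coefK q) poly_def.
by apply: eq_bigr => i _; rewrite rmorphM rmorphXn /= muni_mwiden muni_Xmax mul_polyC.
Qed.
End Uni.


Lemma primeP_transfer (A B : comUnitRingType) (f : {rmorphism A -> B}) :
  injective f -> (forall b, exists a, f a = b) -> primeP B -> primeP A.
Proof.
move=> finj fsurj PB.
have unitB a : f a \is a GRing.unit -> a \is a GRing.unit.
  case/unitrPr => v ev; have [v' ev'] := fsurj v; apply/unitrPr; exists v'.
  by apply: finj; rewrite rmorphM /= ev' ev rmorph1.
move=> p [p0 pu Hp] a b [c ec].
have ip : irr (f p).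
  split.
  - by apply: contraNneq p0 => e; apply/eqP; apply: finj; rewrite e rmorph0.
  - by apply/negP => /unitB; apply/negP.
  move=> u v e; have [u' eu] := fsurj u; have [v' ev] := fsurj v.
  have : p = u' * v' by apply: finj; rewrite rmorphM /= eu ev.
  by case/Hp => U; [left; rewrite -eu | right; rewrite -ev]; apply: rmorph_unit.
case: (PB _ ip (f a) (f b)).
- by exists (f c); rewrite -rmorphM ec rmorphM.
- case=> d ed; have [d' ed'] := fsurj d; left; exists d'.
  by apply: finj; rewrite rmorphM /= ed' ed.
- case=> d ed; have [d' ed'] := fsurj d; right; exists d'.
  by apply: finj; rewrite rmorphM /= ed' ed.
Qed.

Section MPrime.
Variable F : fieldType.

Lemma mpolyC_unit n (c : F) : c != 0 -> (c%:MP : {mpoly F[n]}) \is a GRing.unit.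
Proof. by move=> c0; apply/unitrPr; exists c^-1%:MP; rewrite -mpolyCM mulfV. Qed.

Lemma msize_nonunit n (b : {mpoly F[n]}) : b != 0 -> b \isn't a GRing.unit ->
  (1 < msize b)%N.
Proof.
move=> b0 bu; rewrite ltnNge; apply/negP => le.
have eb := msize1_polyC le; move: bu; rewrite eb mpolyC_unit //.
by apply: contraNneq b0 => e; rewrite eb e.
Qed.

Lemma msz n (a b : {mpoly F[n]}) : a != 0 -> b != 0 -> b \isn't a GRing.unit ->
  (msize a < msize (a * b))%N.
Proof.
move=> a0 b0 bu; rewrite msizeM //; have := msize_nonunit b0 bu.
have := msize_poly_eq0 a; rewrite (negbTE a0).
move: (msize a) (msize b) => x y; lia.
Qed.

Lemma mpoly_primeP n : primeP {mpoly F[n]}.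
Proof.
elim: n => [|n IH].
  move=> p [p0 pu _]; exfalso; move: pu; rewrite (nvar0_mpolyC p) mpolyC_unit //.
  by apply: contraNneq p0 => e; rewrite (nvar0_mpolyC p) e.
apply: (@primeP_transfer _ _ (@muni n F)).
- exact: muni_inj.
- exact: muni_surj.
- exact: (poly_primeP (@msz n) IH).
Qed.
End MPrime.


Section Lie.
Variable F : fieldType.
Variable n : nat.
Variable br : 'rV[F]_n -> 'rV[F]_n -> 'rV[F]_n.
Implicit Types f g : {mpoly F[n]}.

Lemma ad_actM v f g : ad_act br v (f * g) = ad_act br v f * g + f * ad_act br v g.
Proof.
rewrite /ad_act big_distrl big_distrr -big_split /=.
by apply: eq_bigr => j _; rewrite mderivM; ring.
Qed.

Lemma ad_actC v (c : F) : ad_act br v c%:MP = 0.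
Proof. by rewrite /ad_act big1 // => j _; rewrite mderivC mulr0. Qed.

Lemma ad_act0 v : ad_act br v 0 = 0.
Proof. by rewrite -(mpolyC0 n F) ad_actC. Qed.

Lemma ad_act1 v : ad_act br v 1 = 0.
Proof. by rewrite -(mpolyC1 n F) ad_actC. Qed.

Lemma inv0 : invariant br 0. Proof. by move=> v; rewrite ad_act0. Qed.
Lemma inv1 : invariant br 1. Proof. by move=> v; rewrite ad_act1. Qed.
Lemma invC (c : F) : invariant br c%:MP. Proof. by move=> v; rewrite ad_actC. Qed.

Lemma invM f g : invariant br f -> invariant br g -> invariant br (f * g).
Proof. by move=> hf hg v; rewrite ad_actM hf hg mul0r mulr0 addr0. Qed.

Lemma inv_prod (s : seq {mpoly F[n]}) :
  (forall p, p \in s -> invariant br p) -> invariant br (\prod_(p <- s) p).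
Proof.
elim: s => [|a s IH] H; first by rewrite big_nil; exact: inv1.
rewrite big_cons; apply: invM; first by apply: H; rewrite inE eqxx.
by apply: IH => p ps; apply: H; rewrite inE ps orbT.
Qed.

Lemma semi_inv_of_inv f : invariant br f <-> semi_inv_space br (fun _ => 0) f.
Proof. by split=> H v; have := H v; rewrite scale0r. Qed.

Lemma semi_mul (mu nu rho : 'rV[F]_n -> F) f g :
  semi_inv_space br mu f -> semi_inv_space br nu g ->
  (forall v, rho v = mu v + nu v) -> semi_inv_space br rho (f * g).
Proof.
move=> hf hg hr v; rewrite ad_actM hf hg hr scalerDl.
by rewrite -scalerAl -scalerAr.
Qed.

Lemma semi_cancel (mu nu rho : 'rV[F]_n -> F) f g : f != 0 ->
  semi_inv_space br mu f -> semi_inv_space br rho (f * g) ->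
  (forall v, nu v = rho v - mu v) -> semi_inv_space br nu g.
Proof.
move=> f0 hf hfg hn v; apply: (mulfI f0).
have := hfg v; rewrite ad_actM hf hn => e.
rewrite -scalerAr scalerBl; apply/eqP; rewrite eq_sym subr_eq -e.
by rewrite -scalerAl addrC.
Qed.

Lemma unit_msize f : f \is a GRing.unit -> msize f = 1%N.
Proof.
case/unitrPr => g e.
have f0 : f != 0 by apply: contra_eq_neq e => ->; rewrite mul0r eq_sym oner_neq0.
have g0 : g != 0 by apply: contra_eq_neq e => ->; rewrite mulr0 eq_sym oner_neq0.
have := msizeM f0 g0; rewrite e msize1.
have := msize_poly_eq0 f; have := msize_poly_eq0 g; rewrite (negbTE f0) (negbTE g0).
move: (msize f) (msize g) => x y; lia.
Qed.

Lemma Yunit_iff u : Y_unit br u <-> u \is a GRing.unit.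
Proof.
split.
  by case=> _ [w _ e]; apply/unitrPr; exists w.
move=> U; have eu := msize1_polyC (eq_leq (unit_msize U)).
have c0 : u@_0 != 0 by apply: contraTneq U => e; rewrite eu e mpolyC0 unitr0.
rewrite eu; split; first exact: invC.
by exists (u@_0)^-1%:MP; [exact: invC | rewrite -mpolyCM mulfV].
Qed.
End Lie.


Lemma prime_prod (R : comUnitRingType) (p : R) (s : seq R) : primeP R -> irr p ->
  dv p (\prod_(q <- s) q) -> exists2 q, q \in s & dv p q.
Proof.
move=> PR ip; elim: s => [|a s IH].
  rewrite big_nil => -[c e]; case: ip => _ pu _; move: pu.
  by rewrite (_ : p \is a GRing.unit) //; apply/unitrPr; exists c; rewrite mulrC.
rewrite big_cons => /(PR _ ip) [H|/IH [q qs H]].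
  by exists a => //; rewrite inE eqxx.
by exists q => //; rewrite inE qs orbT.
Qed.

Section Main.
Variable F : fieldType.
Variable n : nat.
Variable br : 'rV[F]_n -> 'rV[F]_n -> 'rV[F]_n.
Implicit Types f g : {mpoly F[n]}.

Lemma Yprime (z u v w : {mpoly F[n]}) : Y_is_UFD br -> Y_irreducible br z ->
  invariant br u -> invariant br v -> invariant br w -> z * w = u * v ->
  exists2 w', invariant br w' & (u = w' * z \/ v = w' * z).
Proof.
move=> [Hex Huniq] zi iu iv iw e.
case: (eqVneq u 0) => [->|u0]; first by exists 0; [exact: inv0 | left; rewrite mul0r].
case: (eqVneq v 0) => [->|v0]; first by exists 0; [exact: inv0 | right; rewrite mul0r].
case: (classic (Y_unit br u)) => [[_ [u' iu' eu']]|nu].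
  exists (u' * w); first exact: invM.
  right; transitivity (u' * (u * v)); first by rewrite mulrA [u' * u]mulrC eu' mul1r.
  by rewrite -e; ring.
case: (classic (Y_unit br v)) => [[_ [v' iv' ev']]|nv].
  exists (v' * w); first exact: invM.
  left; transitivity (v' * (u * v)); first by rewrite [u * v]mulrC mulrA [v' * v]mulrC ev' mul1r.
  by rewrite -e; ring.
case: zi => iz z0 nz Hz.
case: (classic (Y_unit br w)) => [[_ [w' iw' ew']]|nw].
  exfalso; have ez : z = u * (v * w') by rewrite mulrA -e -mulrA ew' mulr1.
  case: (Hz _ _ iu (invM iv iw') ez) => // /Yunit_iff U.
  by apply: nv; apply/Yunit_iff; move: U; rewrite unitrM => /andP[].
have w0 : w != 0.
  by apply: contraNneq (mulf_neq0 u0 v0) => w0; rewrite -e w0 mulr0.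
have [su [_ isu eu]] := Hex u iu u0 nu.
have [sv [_ isv ev]] := Hex v iv v0 nv.
have [sw [_ isw ew]] := Hex w iw w0 nw.
have i1 : forall p, p \in su ++ sv -> Y_irreducible br p.
  by move=> p; rewrite mem_cat => /orP[]; [apply: isu | apply: isv].
have i2 : forall p, p \in z :: sw -> Y_irreducible br p.
  move=> p; rewrite inE => /orP[/eqP ->|]; last exact: isw.
  by split.
have ep : \prod_(p <- su ++ sv) p = \prod_(p <- z :: sw) p.
  by rewrite big_cat big_cons -eu -ev -ew e.
have [sz [sigma Hs]] := Huniq _ _ i1 i2 ep.
have pos : (0 < size (su ++ sv))%N by rewrite sz.
pose o := Ordinal pos.
have := Hs ((sigma^-1)%g o); rewrite permKV /= => -[t [it [w1 iw1 ew1]] et].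
set q := nth 0 (su ++ sv) _ in et.
have qin : q \in su ++ sv by apply: mem_nth.
have invl : forall l : seq {mpoly F[n]}, (forall p, p \in l -> Y_irreducible br p) -> forall p, p \in l -> invariant br p.
  by move=> l H p ps; case: (H p ps).
move: qin; rewrite mem_cat => /orP[qs|qs].
  exists (t * \prod_(p <- rem q su) p).
    by apply: invM => //; apply: inv_prod => p /mem_rem; apply: invl.
  by left; rewrite eu (big_rem _ qs) /= et; ring.
exists (t * \prod_(p <- rem q sv) p).
  by apply: invM => //; apply: inv_prod => p /mem_rem; apply: invl.
by right; rewrite ev (big_rem _ qs) /= et; ring.
Qed.

Lemma free0 (mu : 'rV[F]_n -> F) :
  (forall f, semi_inv_space br mu f -> f = 0) -> free_of_rank br mu 0.
Proof.
move=> H; exists (fun _ => 0); split.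
- by case.
- move=> f /H ->; exists (fun _ => 0); split; first by case.
  by rewrite big_ord0.
- by move=> a a' _ _ _ [].
Qed.

Lemma free1 (mu : 'rV[F]_n -> F) b0 : b0 != 0 -> semi_inv_space br mu b0 ->
  (forall f, semi_inv_space br mu f -> exists2 a, invariant br a & f = a * b0) ->
  free_of_rank br mu 1.
Proof.
move=> b00 sb H; exists (fun _ => b0); split=> //.
- move=> f /H [a ia ->]; exists (fun _ => a); split=> //.
  by rewrite big_ord1.
- move=> a a' _ _; rewrite !big_ord1 => /(mulIf b00) e i.
  by rewrite (ord1 i).
Qed.
End Main.

Unset Implicit Arguments.

Theorem mainTheorem8 (F : closedFieldType) (hchar : [pchar F] =i pred0)
  (n : nat) (br : 'rV[F]_n -> 'rV[F]_n -> 'rV[F]_n)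
  (hlie : is_lie_bracket br) (hUFD : Y_is_UFD br)
  (lambda : 'rV[F]_n -> F) (hlin : lin_functional lambda)
  (hlam0 : exists v, lambda v != 0)
  (x : {mpoly F[n]}) (hx0 : x != 0) (hxw : semi_inv_space br lambda x)
  (hxirr : S_irreducible x) :
  (exists2 r, (r <= 1)%N & free_of_rank br lambda r) \/
  (exists2 r, (r <= 1)%N & free_of_rank br (fun v => - lambda v) r).
Proof.
have ix : irr x by [].
have xu : x \isn't a GRing.unit by case: hxirr.
case: (classic (forall g, semi_inv_space br (fun v => - lambda v) g -> g = 0)) => [H0|].
  by right; exists 0%N => //; apply: free0.
move=> Hn; have [g Hg] := not_all_ex_not _ _ Hn; have [sg g0] := imply_to_and _ _ Hg.
have ixg : Defs.invariant br (x * g).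
  apply/semi_inv_of_inv; apply: (semi_mul hxw sg) => v; by rewrite subrr.
have xg0 : x * g != 0 by rewrite mulf_neq0 //; apply/eqP.
have nxg : ~ Y_unit br (x * g).
  by move/Yunit_iff; rewrite unitrM (negbTE xu).
have [s [_ isI exg]] := hUFD.1 _ ixg xg0 nxg.
have : dv x (\prod_(p <- s) p) by rewrite -exg; exists g; rewrite mulrC.
case/(prime_prod (@mpoly_primeP F n) ix) => q qs [h eq].
have [iq q0 nq Hq] := isI q qs.
have h0 : h != 0 by apply: contraNneq q0 => e; rewrite eq e mul0r.
have sh : semi_inv_space br (fun v => - lambda v) h.
  apply: (semi_cancel hx0 hxw (rho := fun _ => 0)); first by rewrite mulrC -eq; apply/semi_inv_of_inv.
  by move=> v; rewrite sub0r.
have key : forall f g', semi_inv_space br lambda f ->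
    semi_inv_space br (fun v => - lambda v) g' ->
    (exists2 a, Defs.invariant br a & f = a * x) \/
    (exists2 a, Defs.invariant br a & g' = a * h).
  move=> f g' sf sg'.
  have inv_of : forall a b, semi_inv_space br lambda a ->
      semi_inv_space br (fun v => - lambda v) b -> Defs.invariant br (a * b).
    by move=> a b sa sb; apply/semi_inv_of_inv; apply: (semi_mul sa sb) => v; rewrite subrr.
  have ez : q * (f * g') = (f * h) * (x * g') by rewrite eq; ring.
  have [w' iw' [E|E]] := Yprime hUFD (isI q qs) (inv_of _ _ sf sh) (inv_of _ _ hxw sg')
      (inv_of _ _ sf sg') ez.
  - left; exists w' => //; apply: (mulIf h0); rewrite E eq; ring.
  - right; exists w' => //; apply: (mulfI hx0); rewrite E eq; ring.
case: (classic (forall f, semi_inv_space br lambda f -> exists2 a, Defs.invariant br a & f = a * x)) => [H|].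
  by left; exists 1%N => //; apply: (free1 hx0 hxw H).
move=> Hn2; have [f Hf] := not_all_ex_not _ _ Hn2; have [sf nf] := imply_to_and _ _ Hf.
right; exists 1%N => //; apply: (free1 h0 sh) => g' sg'.
by case: (key f g' sf sg') => // /nf.
Qed.
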